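(* Let $\mathcal Q=(\mathcal G,\mathcal C)$ be a CWS code in standard form with $K=|\mathcal C|\ge2$ and distance $d$. Let $(\mathcal G',\mathcal C')$ be any CWS code in standard form that is LC-equivalent to $\mathcal Q$ (in particular $(\mathcal G',\mathcal C')=(\mathcal G,\mathcal C)$ is allowed), and let $S'_i=X_iZ^{\mathbf r'_i}$ be the graph-stabilizer generators of $\mathcal G'$. Then $d$ is at most the $d$-th largest of the numbers $\mathrm{wgt}(S'_1),\dots,\mathrm{wgt}(S'_n)$ (where $\mathrm{wgt}(S'_i)=1+\deg_{\mathcal G'}(i)$). In other words, $d$ is bounded by the $d$-th largest weight of the $S_i$, minimized over all such graphs $\mathcal G'$ (which range over graphs locally equivalent to $\mathcal G$).
   Context: A Pauli operator on $n$ qubits is, up to a phase, $X^{\mathbf v}Z^{\mathbf u}=X_1^{v_1}\cdots X_n^{v_n}Z_1^{u_1}\cdots Z_n^{u_n}$ with $\mathbf v,\mathbf u\in\{0,1\}^n$; its weight is the number of qubits on which it acts as a non-identity operator. For a subspace $\mathcal Q\subseteq(\mathbb C^2)^{\otimes n}$ with orthonormal basis $\{|i\rangle\}$, a Pauli operator $E$ is detectable if $\langle j|E|i\rangle=C_E\delta_{ij}$ for all $i,j$, with $C_E$ independent of $i,j$; the distance of $\mathcal Q$ is the smallest weight of a non-detectable Pauli operator. Let $\mathcal G$ be a simple graph on vertex set $\{1,\dots,n\}$ with adjacency matrix $R\in\{0,1\}^{n\times n}$ (symmetric, zero diagonal) and rows $\mathbf r_i$. The graph-stabilizer generators are $S_i=X_iZ^{\mathbf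 r_i}$, $i=1,\dots,n$; they commute, generate an abelian group $\mathscr S_{\mathcal G}$, and stabilize a unique (up to phase) state $|s\rangle$, the graph state. For a binary code $\mathcal C\subseteq\{0,1\}^n$ with $K$ words, the CWS code in standard form is $\mathcal Q=(\mathcal G,\mathcal C)=\operatorname{span}\{Z^{\mathbf c}|s\rangle:\mathbf c\in\mathcal C\}$; it has dimension $K$. Two quantum codes are LC-equivalent if one is mapped onto the other by a qubit permutation followed by a tensor product of single-qubit Clifford unitaries; LC-equivalent codes have equal distance. Two graphs are locally equivalent if one is obtained from the other by a sequence of local complementations (replacing the subgraph induced on the neighbourhood of a vertex by its complement) and graph isomorphisms. *)

(* Defs.v *)
From HB Require Import structures.
From mathcomp Require Import all_boot all_order all_algebra all_fingroup all_field.
Set Implicit Arguments. Unset Strict Implicit. Unset Printing Implicit Defensive.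
Import Order.TTheory GRing.Theory Num.Theory.
Local Open Scope ring_scope.

(* binary vectors of length n (computational basis labels / Pauli exponents) *)
Definition bvec (n : nat) := {ffun 'I_n -> bool}.
(* states of n qubits: amplitude functions on the computational basis *)
Definition state (n : nat) := bvec n -> algC.

Definition bxor n (x y : bvec n) : bvec n := [ffun i => x i (+) y i].
Definition dotb n (u x : bvec n) : bool := \big[addb/false]_(i < n) (u i && x i).
Definition bzero n : bvec n := [ffun _ => false].

(* the Pauli operator X^v Z^u acting on a state:
   X^v Z^u (sum_x f(x)|x>) = sum_x (-1)^(u.x) f(x) |x + v> *)
Definition pauli_app n (v u : bvec n) (f : state n) : state n :=
  fun y => (-1) ^+ (dotb u (bxor y v)) * f (bxor y v).

Definition pweight n (v u : bvec n) : nat := #|[pred i | v i || u i]|.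

Definition inner n (f g : state n) : algC := \sum_(x : bvec n) (f x)^* * g x.

Definition is_graph n (R : 'I_n -> 'I_n -> bool) : Prop :=
  (forall i j, R i j = R j i) /\ (forall i, R i i = false).

Definition unitv n (i : 'I_n) : bvec n := [ffun j => j == i].
Definition adjrow n (R : 'I_n -> 'I_n -> bool) (i : 'I_n) : bvec n := [ffun j => R i j].

Definition gen_app n (R : 'I_n -> 'I_n -> bool) (i : 'I_n) : state n -> state n :=
  pauli_app (unitv i) (adjrow R i).
Definition gen_weight n (R : 'I_n -> 'I_n -> bool) (i : 'I_n) : nat :=
  pweight (unitv i) (adjrow R i).

(* s is the graph state of R (normalized, stabilized by all S_i; unique up to phase) *)
Definition graph_state n (R : 'I_n -> 'I_n -> bool) (s : state n) : Prop :=
  (forall i, gen_app R i s = s) /\ inner s s = 1.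

(* basis vectors Z^c |s> of the CWS code (G, C) in standard form *)
Definition cws_vec n (s : state n) (c : bvec n) : state n := pauli_app (bzero n) c s.

Definition detectable n (C : {set bvec n}) (B : bvec n -> state n)
    (E : state n -> state n) : Prop :=
  exists cE : algC, forall c c', c \in C -> c' \in C ->
    inner (B c') (E (B c)) = if c == c' then cE else 0.

Definition is_distance n (C : {set bvec n}) (B : bvec n -> state n) (d : nat) : Prop :=
  (exists v u : bvec n, pweight v u = d /\ ~ detectable C B (pauli_app v u)) /\
  (forall v u : bvec n, (pweight v u < d)%N -> detectable C B (pauli_app v u)).

Definition in_span n (C : {set bvec n}) (B : bvec n -> state n) (f : state n) : Prop :=
  exists a : bvec n -> algC, forall x, f x = \sum_(c in C) a c * B c x.

Definition bit_ord (b : bool) : 'I_2 := if b then ord_max else ord0.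
Definition pX : 'M[algC]_2 := \matrix_(i < 2, j < 2) ((i != j)%:R).
Definition pZ : 'M[algC]_2 := \matrix_(i < 2, j < 2) ((i == j)%:R * (-1) ^+ (i : nat)).
Definition pmx (a b : bool) : 'M[algC]_2 :=
  (if a then pX else 1%:M) *m (if b then pZ else 1%:M).
Definition adj2 (U : 'M[algC]_2) : 'M[algC]_2 := (map_mx Num.conj U)^T.
Definition clifford1 (U : 'M[algC]_2) : Prop :=
  U *m adj2 U = 1%:M /\
  forall a b : bool, exists (a' b' : bool) (c : algC), U *m pmx a b *m adj2 U = c *: pmx a' b'.

Definition perm_op n (p : 'S_n) (f : state n) : state n :=
  fun x => f [ffun i => x (p i)].
Definition local_op n (U : 'I_n -> 'M[algC]_2) (f : state n) : state n :=
  fun x => \sum_(y : bvec n) (\prod_(k < n) U k (bit_ord (x k)) (bit_ord (y k))) * f y.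

Definition LC_equiv n (C : {set bvec n}) (B : bvec n -> state n)
    (C' : {set bvec n}) (B' : bvec n -> state n) : Prop :=
  exists (p : 'S_n) (U : 'I_n -> 'M[algC]_2),
    (forall k, clifford1 (U k)) /\
    (forall f, in_span C B f -> in_span C' B' (local_op U (perm_op p f))) /\
    (forall g, in_span C' B' g -> exists f, in_span C B f /\ g = local_op U (perm_op p f)).

(* the d-th largest (1-indexed) of the generator weights wgt(S_1),...,wgt(S_n) *)
Definition dth_largest_gen_weight n (R : 'I_n -> 'I_n -> bool) (d : nat) : nat :=
  nth 0%N (sort geq [seq gen_weight R i | i <- enum 'I_n]) d.-1.

(* Main.v *)
Require Import Defs.
From HB Require Import structures.
From mathcomp Require Import all_boot all_order all_algebra all_fingroup all_field.
From mathcomp Require Import ring.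
From Stdlib Require Import IndefiniteDescription.
Set Implicit Arguments. Unset Strict Implicit. Unset Printing Implicit Defensive.
Import Order.TTheory GRing.Theory Num.Theory.

Local Open Scope ring_scope.

Section Bits.
Variable n : nat.

Lemma bxorK (x y : bvec n) : bxor (bxor x y) y = x.
Proof. by apply/ffunP=> i; rewrite !ffunE addbK. Qed.

Lemma bxor_inj (y : bvec n) : injective (fun x => bxor x y).
Proof. by move=> a b /= H; rewrite -(bxorK a y) H bxorK. Qed.

Lemma bxor0 (x : bvec n) : bxor x (bzero n) = x.
Proof. by apply/ffunP=> i; rewrite !ffunE addbF. Qed.

Lemma dotbDr (u x y : bvec n) : dotb u (bxor x y) = dotb u x (+) dotb u y.
Proof.
rewrite /dotb -big_split /=; apply: eq_bigr => i _; rewrite ffunE.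
by case: (u i); case: (x i); case: (y i).
Qed.

Lemma dotbDl (u w x : bvec n) : dotb (bxor u w) x = dotb u x (+) dotb w x.
Proof.
rewrite /dotb -big_split /=; apply: eq_bigr => i _; rewrite ffunE.
by case: (u i); case: (x i); case: (w i).
Qed.

Lemma dotb_unit (u : bvec n) i : dotb u (unitv i) = u i.
Proof.
rewrite /dotb (bigD1 i) //= big1 ?addbF; first by rewrite ffunE eqxx andbT.
by move=> j /negbTE ji; rewrite ffunE ji andbF.
Qed.

Lemma sign_dotb (u x : bvec n) :
  (-1) ^+ (dotb u x) = \prod_(i < n) ((-1) ^+ (u i && x i) : algC).
Proof.
rewrite /dotb; apply: (big_morph (fun b : bool => (-1) ^+ b : algC)) => //.
by move=> a b; rewrite signr_addb.
Qed.

Lemma sign_conj (b : bool) : ((-1) ^+ b : algC)^* = (-1) ^+ b.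
Proof. by rewrite rmorphXn rmorphN1. Qed.

Lemma sign_sq (b : bool) : ((-1) ^+ b : algC) * (-1) ^+ b = 1.
Proof. by rewrite -signr_addb addbb. Qed.

End Bits.

Local Open Scope ring_scope.

Section Pauli.
Variable n : nat.
Implicit Types (v u c x y : bvec n) (s f g : state n).

Lemma cwsE s c x : cws_vec s c x = (-1) ^+ (dotb c x) * s x.
Proof. by rewrite /cws_vec /pauli_app bxor0. Qed.

Lemma pauli_cws v u s c y :
  pauli_app v u (cws_vec s c) y = (-1) ^+ (dotb c v) * cws_vec (pauli_app v u s) c y.
Proof.
rewrite /pauli_app !cwsE /pauli_app (dotbDr c) signr_addb.
ring.
Qed.

Lemma Z_cws s w c y : pauli_app (bzero n) w (cws_vec s c) y = cws_vec s (bxor w c) y.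
Proof.
rewrite /pauli_app !cwsE bxor0 dotbDl signr_addb; by rewrite mulrA.
Qed.

Lemma inner_ext f g g' : (forall x, g x = g' x) -> inner f g = inner f g'.
Proof. by move=> H; apply: eq_bigr => x _; rewrite H. Qed.

Lemma inner_ext2 f f' g : (forall x, f x = f' x) -> inner f g = inner f' g.
Proof. by move=> H; apply: eq_bigr => x _; rewrite H. Qed.

Lemma innerZr f g k : inner f (fun x => k * g x) = k * inner f g.
Proof. by rewrite /inner mulr_sumr; apply: eq_bigr => x _; rewrite mulrCA. Qed.

Lemma cws_orth R s c c' : graph_state R s ->
  inner (cws_vec s c') (cws_vec s c) = (c == c')%:R.
Proof.
case=> Hst Hn.
have E1 : inner (cws_vec s c') (cws_vec s c) =
   \sum_x (-1) ^+ (dotb (bxor c c') x) * ((s x)^* * s x).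
  apply: eq_bigr => x _; rewrite !cwsE rmorphM /= sign_conj dotbDl signr_addb.
  ring.
rewrite E1; case: eqP => [->|/eqP ne].
  rewrite -Hn; apply: eq_bigr => x _.
  have -> : bxor c' c' = bzero n by apply/ffunP=> i; rewrite !ffunE addbb.
  suff -> : dotb (bzero n) x = false by rewrite mul1r.
  by rewrite /dotb big1 // => i _; rewrite ffunE.
have [i Hi] : exists i, bxor c c' i.
  apply/existsP; apply: contraR ne; rewrite negb_exists => /forallP H.
  apply/eqP/ffunP=> j; move: (H j); rewrite ffunE.
  by case: (c j); case: (c' j).
set w := bxor c c'.
set S := \sum_x _.
have hs : forall x, (s (bxor x (unitv i)))^* * s (bxor x (unitv i)) = (s x)^* * s x.
  move=> x; have := congr1 (fun h => h x) (Hst i).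
  rewrite /gen_app /pauli_app /= => <-.
  rewrite rmorphM /= sign_conj mulrACA sign_sq mul1r.
  done.
have HS : S = - S.
  rewrite {1}/S (reindex_inj (@bxor_inj _ (unitv i))) /= /S -sumrN.
  apply: eq_bigr => x _; rewrite hs dotbDr dotb_unit Hi signr_addb expr1.
  by rewrite mulrN1 mulNr.
apply/eqP; rewrite -[S == 0]orbb; move: HS => /eqP; rewrite -addr_eq0 -mulr2n.
by rewrite mulrn_eq0 /= => ->.
Qed.

End Pauli.

Local Open Scope ring_scope.

Lemma ord2_bit (i : 'I_2) : exists b, i = bit_ord b.
Proof.
case: i => [[|[|//]]] Hi; [exists false|exists true]; exact: val_inj.
Qed.

Lemma sum2 (F : 'I_2 -> algC) : \sum_(i < 2) F i = F (bit_ord false) + F (bit_ord true).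
Proof. rewrite big_ord_recl big_ord1 /=; congr (F _ + F _); exact: val_inj. Qed.

Lemma pmx_entry a b y x :
  pmx a b (bit_ord y) (bit_ord x) = if x == y (+) a then (-1) ^+ (b && x) else 0.
Proof.
rewrite /pmx mxE sum2.
by case: a; case: b; case: y; case: x; rewrite /pX /pZ !mxE /= ?mulr0 ?mul0r ?mulr1 ?mul1r ?addr0 ?add0r ?expr1 ?expr0.
Qed.

Lemma pmx_mull a b (M : 'M[algC]_2) y j :
  (pmx a b *m M) (bit_ord y) j = (-1) ^+ (b && (y (+) a)) * M (bit_ord (y (+) a)) j.
Proof.
rewrite mxE sum2 !pmx_entry.
by case: a; case: b; case: y; rewrite /= ?mul0r ?add0r ?addr0.
Qed.

Lemma pmx_mulr a b (M : 'M[algC]_2) i x :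
  (M *m pmx a b) i (bit_ord x) = M i (bit_ord (x (+) a)) * (-1) ^+ (b && x).
Proof.
rewrite mxE sum2 !pmx_entry.
by case: a; case: b; case: x; rewrite /= ?mulr0 ?add0r ?addr0.
Qed.

Lemma c_eqN (c : algC) : c = - c -> c = 0.
Proof.
move/eqP; rewrite -addr_eq0 -mulr2n mulrn_eq0 /= => /eqP //.
Qed.

Lemma scaleE (c : algC) (M : 'M[algC]_2) i j : (c *: M) i j = c * M i j.
Proof. by rewrite mxE. Qed.

Lemma pmx_eq a1 b1 a2 b2 (c1 c2 : algC) : c1 != 0 ->
  c1 *: pmx a1 b1 = c2 *: pmx a2 b2 -> a1 = a2 /\ b1 = b2.
Proof.
move=> c10 /matrixP H0.
have H1 := H0 (bit_ord false) (bit_ord false).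
have H2 := H0 (bit_ord false) (bit_ord true).
have H3 := H0 (bit_ord true) (bit_ord false).
have H4 := H0 (bit_ord true) (bit_ord true).
rewrite !scaleE !pmx_entry in H1 H2 H3 H4.
clear H0; case: a1 b1 a2 b2 H1 H2 H3 H4 => [] [] [] [] /=; rewrite ?mulr0 ?mulr1 ?expr1 ?expr0 ?mulrN1 => H1 H2 H3 H4 //.
all: move: H1 H2 H3 H4; rewrite ?mulr0 ?mul0r ?mulr1 ?mulrN1 ?mulN1r => H1 H2 H3 H4.
all: exfalso; move/eqP: c10; apply.
all: first [ exact H1 | exact H2 | exact H3 | exact H4 | apply: c_eqN; first [ by rewrite {1}H1 -H2 | by rewrite {1}H1 H2 | by rewrite {1}H1 -H2 opprK | by rewrite -{1}H1 H2 | by rewrite {1}H1 -H3 | by rewrite {1}H1 H3 | by rewrite {1}H1 -H3 opprK | by rewrite -{1}H1 H3 | by rewrite {1}H1 -H4 | by rewrite {1}H1 H4 | by rewrite {1}H1 -H4 opprK | by rewrite -{1}H1 H4 | by rewrite {1}H2 -H1 | by rewrite {1}H2 H1 | by rewrite {1}H2 -H1 opprK | by rewrite -{1}H2 H1 | by rewrite {1}H2 -H3 | by rewrite {1}H2 H3 | by rewrite {1}H2 -H3 opprK | by rewrite -{1}H2 H3 | by rewrite {1}H2 -H4 | by rewrite {1}H2 H4 | by rewrite {1}H2 -H4 opprK | by rewrite -{1}H2 H4 | by rewrite {1}H3 -H1 | by rewrite {1}H3 H1 | by rewrite {1}H3 -H1 opprK | by rewrite -{1}H3 H1 | by rewrite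 {1}H3 -H2 | by rewrite {1}H3 H2 | by rewrite {1}H3 -H2 opprK | by rewrite -{1}H3 H2 | by rewrite {1}H3 -H4 | by rewrite {1}H3 H4 | by rewrite {1}H3 -H4 opprK | by rewrite -{1}H3 H4 | by rewrite {1}H4 -H1 | by rewrite {1}H4 H1 | by rewrite {1}H4 -H1 opprK | by rewrite -{1}H4 H1 | by rewrite {1}H4 -H2 | by rewrite {1}H4 H2 | by rewrite {1}H4 -H2 opprK | by rewrite -{1}H4 H2 | by rewrite {1}H4 -H3 | by rewrite {1}H4 H3 | by rewrite {1}H4 -H3 opprK | by rewrite -{1}H4 H3 ] ].
Qed.

Lemma pmx00 : pmx false false = 1%:M.
Proof. by rewrite /pmx mulmx1. Qed.

Lemma pmx_neq0 a b : pmx a b != 0.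
Proof.
apply/negP => /eqP/matrixP/(_ (bit_ord false) (bit_ord a)).
rewrite pmx_entry mxE /= eqxx; case: a; case: b => /=; rewrite ?expr0 ?expr1;
  move/eqP; rewrite ?oppr_eq0 oner_eq0 //.
Qed.

Lemma cliff_conj U : clifford1 U -> forall a' b', exists a b (l : algC),
  pmx a' b' *m U = l *: (U *m pmx a b) /\ (a || b) = (a' || b').
Proof.
case=> hU1 H.
have hU2 : adj2 U *m U = 1%:M by apply: mulmx1C.
have back : forall P M, U *m P *m adj2 U = M -> P = adj2 U *m M *m U.
  by move=> P M <-; rewrite !mulmxA hU2 mul1mx -mulmxA hU2 mulmx1.
pose Pr (ab : bool * bool) (t : bool * bool * algC) :=
  U *m pmx ab.1 ab.2 *m adj2 U == t.2 *: pmx t.1.1 t.1.2.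
have ex : forall ab, exists t, Pr ab t.
  by move=> [a b]; have [a' [b' [c E]]] := H a b; exists ((a', b'), c); apply/eqP.
pose G ab := xchoose (ex ab).
have GP : forall ab, Pr ab (G ab) by move=> ab; exact: xchooseP.
have cnz : forall a b a' b' c, U *m pmx a b *m adj2 U = c *: pmx a' b' -> c != 0.
  move=> a b a' b' c E; apply/negP => /eqP c0.
  move: E; rewrite c0 scale0r => /back; rewrite mulmx0 mul0mx => /eqP.
  by rewrite (negbTE (pmx_neq0 _ _)).
pose F ab := (G ab).1.
have Finj : injective F.
  move=> [a1 b1] [a2 b2]; rewrite /F.
  have /eqP E1 := GP (a1, b1); have /eqP E2 := GP (a2, b2).
  move: E1 E2; case: (G (a1, b1)) => [[x1 y1] c1]; case: (G (a2, b2)) => [[x2 y2] c2] /=.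
  move=> E1 E2 [ex1 ey1]; subst x2 y2.
  have n1 := cnz _ _ _ _ _ E1; have n2 := cnz _ _ _ _ _ E2.
  move/back: E1 => E1; move/back: E2 => E2.
  have : c2 *: pmx a1 b1 = c1 *: pmx a2 b2.
    by rewrite E1 E2 -!scalemxAr -!scalemxAl !scalerA mulrC.
  by case/pmx_eq => // -> ->.
have [Fi FK KF] := injF_bij Finj.
move=> a' b'.
set ab := Fi (a', b').
have /eqP E := GP ab.
have FE : F ab = (a', b') by rewrite /ab KF.
move: E FE; rewrite /F; case: (G ab) => [[x y] c] /= E [ex1 ey1]; subst x y.
case: ab E => a b /= E.
have cn := cnz _ _ _ _ _ E.
exists a, b, c^-1; split.
  have E' : U *m pmx a b = c *: (pmx a' b' *m U).
    by rewrite scalemxAl -E -!mulmxA hU2 mulmx1.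
  by rewrite E' scalerA mulVf // scale1r.
have W1 : (a, b) = (false, false) -> (a', b') = (false, false).
  case=> ea eb; subst a b; move: E; rewrite pmx00 mulmx1 hU1 -(scale1r 1%:M) -pmx00.
  by case/pmx_eq; rewrite ?oner_neq0 // => <- <-.
have W2 : (a', b') = (false, false) -> (a, b) = (false, false).
  case=> ea eb; subst a' b'; move/back: E; rewrite pmx00 -scalemxAr mulmx1 -scalemxAl hU2.
  rewrite -(scale1r (pmx a b)) -pmx00 => E.
  by case/pmx_eq: E; rewrite ?oner_neq0 // => -> ->.
clear E cn; move: W1 W2; case: a; case: b; case: a'; case: b' => //= W1 W2.
all: try by move: (W1 erefl). 
all: by move: (W2 erefl).
Qed.

Local Open Scope ring_scope.

Section Local.
Variable n : nat.
Implicit Types (v u c x y : bvec n) (f g : state n).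

Lemma local_conj (U : 'I_n -> 'M[algC]_2) v' u' v u (l : 'I_n -> algC) :
  (forall k, pmx (v' k) (u' k) *m U k = l k *: (U k *m pmx (v k) (u k))) ->
  forall f y, pauli_app v' u' (local_op U f) y =
              (\prod_(k < n) l k) * local_op U (pauli_app v u f) y.
Proof.
move=> HU f y; rewrite /pauli_app /local_op.
rewrite (reindex_inj (@bxor_inj _ v)) /= mulr_sumr mulr_sumr.
apply: eq_bigr => x _.
rewrite !mulrA; congr (_ * _).
have E : forall k, (-1) ^+ (u' k && bxor y v' k) *
    U k (bit_ord (bxor y v' k)) (bit_ord (bxor x v k)) =
    l k * U k (bit_ord (y k)) (bit_ord (x k)) * (-1) ^+ (u k && bxor x v k).
  move=> k.
  have := congr1 (fun M : 'M[algC]_2 => M (bit_ord (y k)) (bit_ord (bxor x v k))) (HU k).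
  by rewrite /= pmx_mull scaleE pmx_mulr !ffunE addbK => ->; ring.
rewrite !sign_dotb -big_split (eq_bigr _ (fun k _ => E k)) !big_split /=.
done.
Qed.

End Local.

Section Unit.
Variable n : nat.
Implicit Types (v u c x y : bvec n) (f g : state n).

Lemma sum_ffun_prod (F : 'I_n -> bool -> algC) :
  \sum_(x : bvec n) \prod_(k < n) F k (x k) = \prod_(k < n) \sum_(b : bool) F k b.
Proof. by rewrite bigA_distr_bigA. Qed.

Lemma bit_ord_inj : injective bit_ord.
Proof. by case; case. Qed.

Lemma adj_entry (M : 'M[algC]_2) (y z : bool) :
  \sum_(b : bool) (M (bit_ord b) (bit_ord y))^* * M (bit_ord b) (bit_ord z) =
  (adj2 M *m M) (bit_ord y) (bit_ord z).
Proof.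
rewrite mxE sum2 big_bool /= addrC; congr (_ + _); by rewrite /adj2 !mxE.
Qed.

Lemma prod_eq (y z : bvec n) :
  \prod_(k < n) ((y k == z k)%:R : algC) = (y == z)%:R.
Proof.
case: eqP => [->|/eqP ne]; first by rewrite big1 // => k _; rewrite eqxx.
have [k Hk] : exists k, y k != z k.
  apply/existsP; apply: contraR ne; rewrite negb_exists => /forallP H.
  by apply/eqP/ffunP => k; move: (H k); rewrite negbK => /eqP.
by rewrite (bigD1 k) //= (negbTE Hk) mul0r.
Qed.

Lemma local_unitary (U : 'I_n -> 'M[algC]_2) :
  (forall k, adj2 (U k) *m U k = 1%:M) ->
  forall f g, inner (local_op U f) (local_op U g) = inner f g.
Proof.
move=> HU f g; rewrite /inner /local_op.
under eq_bigr do rewrite rmorph_sum /= mulr_suml.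
under eq_bigr do under eq_bigr do rewrite mulr_sumr.
rewrite exchange_big /=; apply: eq_bigr => y _.
rewrite exchange_big /=.
transitivity (\sum_z ((y == z)%:R * ((f y)^* * g z))).
  apply: eq_bigr => z _.
  rewrite -prod_eq.
  have -> : \prod_(k < n) ((y k == z k)%:R : algC) =
     \sum_(x : bvec n) \prod_(k < n) ((U k (bit_ord (x k)) (bit_ord (y k)))^* *
                                     U k (bit_ord (x k)) (bit_ord (z k))).
    rewrite (sum_ffun_prod (fun k b => (U k (bit_ord b) (bit_ord (y k)))^* * U k (bit_ord b) (bit_ord (z k)))); apply: eq_bigr => k _.
    by rewrite adj_entry HU mxE (inj_eq bit_ord_inj).
  rewrite mulr_suml; apply: eq_bigr => x _.
  rewrite rmorphM rmorph_prod /= big_split /=.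
  by rewrite mulrACA.
rewrite (bigD1 y) //= eqxx mul1r big1 ?addr0 // => z; rewrite eq_sym => /negbTE ->; by rewrite mul0r.
Qed.

End Unit.

Section Perm.
Variable n : nat.
Implicit Types (v u c x y : bvec n) (f g : state n).

Definition permv (p : 'S_n) (x : bvec n) : bvec n := [ffun i => x (p i)].

Lemma permv_inj p : injective (permv p).
Proof.
move=> x y /ffunP H; apply/ffunP => j.
by have := H (p^-1 j)%g; rewrite !ffunE permKV.
Qed.

Lemma perm_unitary p f g : inner (perm_op p f) (perm_op p g) = inner f g.
Proof. by rewrite /inner [RHS](reindex_inj (@permv_inj p)). Qed.

Lemma permv_xor p x y : permv p (bxor x y) = bxor (permv p x) (permv p y).
Proof. by apply/ffunP => i; rewrite !ffunE. Qed.

Lemma dotb_perm p u x : dotb (permv p u) (permv p x) = dotb u x.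
Proof.
rewrite /dotb [RHS](reindex_inj (@perm_inj _ p)) /=.
by apply: eq_bigr => i _; rewrite !ffunE.
Qed.

Lemma perm_conj p v1 u1 f y :
  pauli_app v1 u1 (perm_op p f) y = perm_op p (pauli_app (permv p v1) (permv p u1) f) y.
Proof.
rewrite /pauli_app /perm_op.
have -> : [ffun i => bxor y v1 (p i)] = bxor (permv p y) (permv p v1) by rewrite -permv_xor.
by rewrite -permv_xor dotb_perm.
Qed.

Lemma pweight_perm p v u : pweight (permv p v) (permv p u) = pweight v u.
Proof.
rewrite /pweight -!sum1_card [RHS](reindex_inj (@perm_inj _ p)) /=.
by apply: eq_bigl => i; rewrite !inE !ffunE.
Qed.

End Perm.

Section T.
Variable n : nat.

Lemma local_ext (U : 'I_n -> 'M[algC]_2) (h h' : state n) y :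
  (forall x, h x = h' x) -> local_op U h y = local_op U h' y.
Proof. by move=> H; apply: eq_bigr => x _; rewrite H. Qed.

Lemma T_conj (p : 'S_n) (U : 'I_n -> 'M[algC]_2) : (forall k, clifford1 (U k)) ->
  forall v' u' : bvec n, exists (v u : bvec n) (lam : algC),
    pweight v u = pweight v' u' /\
    forall f y, pauli_app v' u' (local_op U (perm_op p f)) y =
                lam * local_op U (perm_op p (pauli_app v u f)) y.
Proof.
move=> HU v' u'.
have ex : forall k, exists t : (bool * bool * algC)%type,
   (pmx (v' k) (u' k) *m U k = t.2 *: (U k *m pmx t.1.1 t.1.2)) /\
   ((t.1.1 || t.1.2) = (v' k || u' k)).
  move=> k; have [a [b [l [E W]]]] := cliff_conj (HU k) (v' k) (u' k).
  by exists ((a, b), l).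
have [t tP] : exists t : 'I_n -> (bool * bool * algC)%type, forall k,
   (pmx (v' k) (u' k) *m U k = (t k).2 *: (U k *m pmx (t k).1.1 (t k).1.2)) /\
   (((t k).1.1 || (t k).1.2) = (v' k || u' k)).
  exists (fun k => proj1_sig (constructive_indefinite_description _ (ex k))).
  by move=> k; exact: (proj2_sig (constructive_indefinite_description _ (ex k))).
pose v1 : bvec n := [ffun k => (t k).1.1].
pose u1 : bvec n := [ffun k => (t k).1.2].
exists (permv p v1), (permv p u1), (\prod_k (t k).2); split.
  rewrite pweight_perm /pweight; apply: eq_card => k; rewrite !inE !ffunE.
  by case: (tP k) => _.
move=> f y.
rewrite (@local_conj _ U v' u' v1 u1 (fun k => (t k).2)).
  by congr (_ * _); apply: local_ext => x; rewrite perm_conj.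
by move=> k; case: (tP k) => -> _; rewrite !ffunE.
Qed.

End T.

Local Open Scope ring_scope.

Section Transfer.
Variable n : nat.
Implicit Types (f g h : state n) (C : {set bvec n}) (B : bvec n -> state n).

Lemma innerZl f g k : inner (fun x => k * f x) g = k^* * inner f g.
Proof.
by rewrite /inner mulr_sumr; apply: eq_bigr => x _; rewrite rmorphM mulrA.
Qed.

Lemma inner_sumr g h C B a : (forall x, h x = \sum_(c in C) a c * B c x) ->
  inner g h = \sum_(c in C) a c * inner g (B c).
Proof.
move=> H; rewrite (inner_ext _ H) /inner.
under eq_bigr do rewrite mulr_sumr.
rewrite exchange_big /=; apply: eq_bigr => c _; rewrite mulr_sumr.
by apply: eq_bigr => x _; rewrite mulrCA.
Qed.

Lemma inner_suml g h C B b : (forall x, g x = \sum_(c in C) b c * B c x) ->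
  inner g h = \sum_(c in C) (b c)^* * inner (B c) h.
Proof.
move=> H; rewrite (inner_ext2 _ H) /inner.
under eq_bigr do rewrite rmorph_sum /= mulr_suml.
rewrite exchange_big /=; apply: eq_bigr => c _; rewrite mulr_sumr.
by apply: eq_bigr => x _; rewrite rmorphM mulrA.
Qed.

Lemma sum_delta C (F : bvec n -> algC) c0 (e : algC) : c0 \in C ->
  \sum_(c in C) F c * (if c == c0 then e else 0) = F c0 * e.
Proof.
move=> h; rewrite (bigD1 c0) //= eqxx big1 ?addr0 // => c /andP [_ /negbTE ->].
by rewrite mulr0.
Qed.

Lemma in_span_self C B c : c \in C -> in_span C B (B c).
Proof.
move=> h; exists (fun c0 => (c0 == c)%:R) => x.
rewrite (bigD1 c) //= eqxx mul1r big1 ?addr0 // => c0 /andP [_ /negbTE ->].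
by rewrite mul0r.
Qed.

Lemma transfer C C' B B' (T : state n -> state n) (E E' : state n -> state n)
    (lam : algC) :
  (forall c c', c \in C -> c' \in C -> inner (B c') (B c) = (c == c')%:R) ->
  (forall c c', c \in C' -> c' \in C' -> inner (B' c') (B' c) = (c == c')%:R) ->
  (forall f g, inner (T f) (T g) = inner f g) ->
  (forall f y, E' (T f) y = lam * T (E f) y) ->
  (forall f a, (forall x, f x = \sum_(c in C) a c * B c x) ->
      forall y, E f y = \sum_(c in C) a c * E (B c) y) ->
  (forall g, in_span C' B' g -> exists f, in_span C B f /\ g = T f) ->
  detectable C B E -> detectable C' B' E'.
Proof.
move=> oC oC' uT hE linE h3 [cE HcE].
exists (lam * cE) => c c' hc hc'.
have [f [[a Ha] ef]] := h3 _ (in_span_self B' hc).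
have [g [[b Hb] eg]] := h3 _ (in_span_self B' hc').
have key : inner g (E f) = cE * inner g f.
  rewrite (inner_suml _ Hb) (inner_suml _ Hb) mulr_sumr.
  apply: eq_bigr => c0 h0.
  rewrite (inner_sumr _ (linE f a Ha)) (inner_sumr _ Ha).
  under eq_bigr => c1 h1 do rewrite (HcE _ _ h1 h0).
  under [X in _ = _ * (_ * X)]eq_bigr => c1 h1 do rewrite (oC _ _ h1 h0).
  rewrite sum_delta //.
  have -> : \sum_(i in C) a i * ((i == c0)%:R : algC) = a c0.
    rewrite (bigD1 c0) //= eqxx mulr1 big1 ?addr0 // => c1 /andP [_ /negbTE ->].
    by rewrite mulr0.
  by ring.
rewrite eg ef (inner_ext _ (hE f)) innerZr uT key -uT -eg -ef oC' //.
by case: (c == c'); rewrite ?mulr1 ?mulr0.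
Qed.

Lemma two_elems C C' B B' (T : state n -> state n) c1 c2 :
  (forall c c', c \in C -> c' \in C -> inner (B c') (B c) = (c == c')%:R) ->
  (forall c c', c \in C' -> c' \in C' -> inner (B' c') (B' c) = (c == c')%:R) ->
  (forall f g, inner (T f) (T g) = inner f g) ->
  (forall f, in_span C B f -> in_span C' B' (T f)) ->
  c1 \in C -> c2 \in C -> c1 != c2 ->
  exists c1' c2', [/\ c1' \in C', c2' \in C' & c1' != c2'].
Proof.
move=> oC oC' uT h2 h1 h2' ne.
case: (boolP [exists c1', exists c2', [&& c1' \in C', c2' \in C' & c1' != c2']]).
  by case/existsP => x /existsP [y /and3P [? ? ?]]; exists x, y.
rewrite negb_exists => /forallP Hall.
have eq1 : forall x y, x \in C' -> y \in C' -> x = y.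
  move=> x y hx hy; move: (Hall x); rewrite negb_exists => /forallP /(_ y).
  by rewrite hx hy /= negbK => /eqP.
have [a1 Ha1] := h2 _ (in_span_self B h1).
have [a2 Ha2] := h2 _ (in_span_self B h2').
have n1 : inner (T (B c1)) (T (B c1)) = 1 by rewrite uT oC // eqxx.
have n2 : inner (T (B c2)) (T (B c2)) = 1 by rewrite uT oC // eqxx.
have o12 : inner (T (B c1)) (T (B c2)) = 0 by rewrite uT oC // eq_sym (negbTE ne).
case: (set_0Vmem C') => [C0 | [c0 hc0]].
  move: n1; rewrite (inner_sumr _ Ha1) C0 big_set0 => /eqP; by rewrite eq_sym oner_eq0.
have red : forall (a : bvec n -> algC) x,
    \sum_(c in C') a c * B' c x = a c0 * B' c0 x.
  move=> a x; rewrite (bigD1 c0) //= big1 ?addr0 // => c /andP [hc nc].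
  by move: nc; rewrite (eq1 _ _ hc hc0) eqxx.
have e1 : forall x, T (B c1) x = a1 c0 * B' c0 x by move=> x; rewrite Ha1 red.
have e2 : forall x, T (B c2) x = a2 c0 * B' c0 x by move=> x; rewrite Ha2 red.
move: n1; rewrite (inner_ext2 _ e1) (inner_ext _ e1) innerZl innerZr oC' // eqxx mulr1 => n1.
move: n2; rewrite (inner_ext2 _ e2) (inner_ext _ e2) innerZl innerZr oC' // eqxx mulr1 => n2.
move: o12; rewrite (inner_ext2 _ e1) (inner_ext _ e2) innerZl innerZr oC' // eqxx mulr1.
move=> /eqP; rewrite mulf_eq0 => /orP [] /eqP z.
  by move: n1; rewrite z mul0r => /eqP; rewrite eq_sym oner_eq0.
by move: n2; rewrite z mulr0 => /eqP; rewrite eq_sym oner_eq0.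
Qed.

End Transfer.

Local Close Scope ring_scope.

Lemma count_bound (s : seq nat) k d : sorted geq s -> (nth 0 s k < d)%N ->
  (count (fun w => d <= w) s <= k)%N.
Proof.
move=> so hk; case: (ltnP k (size s)) => ks; last first.
  by apply: leq_trans (count_size _ _) ks.
rewrite -(cat_take_drop k s) count_cat.
have -> : count (fun w => d <= w) (drop k s) = 0%N.
  apply/eqP; rewrite -leqn0 leqNgt -has_count; apply/hasPn => x /(nthP 0) [j hj <-].
  rewrite nth_drop -ltnNge; apply: leq_ltn_trans hk.
  have tr : transitive geq by move=> a b c /= h1 h2; apply: leq_trans h2 h1.
  have rf : reflexive geq by move=> a /=.
  rewrite size_drop in hj.
  apply: (sorted_leq_nth tr rf 0 so); rewrite ?inE ?leq_addr //.
  by rewrite -ltn_subRL.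
rewrite addn0; apply: leq_trans (count_size _ _) _.
by rewrite size_take ks.
Qed.

Lemma count_card n (P : pred 'I_n) : count P (enum 'I_n) = #|P|.
Proof.
rewrite -sum1_count big_enum_cond -sum1_card.
by apply: eq_bigl => i; rewrite !inE.
Qed.

Theorem theorem3 (n : nat)
  (R : 'I_n -> 'I_n -> bool) (s : state n) (C : {set bvec n}) (d : nat)
  (R' : 'I_n -> 'I_n -> bool) (s' : state n) (C' : {set bvec n}) :
  is_graph R -> graph_state R s -> (2 <= #|C|)%N ->
  is_distance C (cws_vec s) d ->
  is_graph R' -> graph_state R' s' ->
  LC_equiv C (cws_vec s) C' (cws_vec s') ->
  (d <= dth_largest_gen_weight R' d)%N.
Proof.
move=> _ gs hC [_ hdet] _ gs' [p [U [hU [h2 h3]]]].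
rewrite leqNgt; apply/negP => hlt.
have hd : (0 < d)%N by apply: leq_ltn_trans hlt.
have oC : forall c c', c \in C -> c' \in C ->
    inner (cws_vec s c') (cws_vec s c) = (c == c')%:R%R.
  by move=> c c' _ _; exact: cws_orth gs.
have oC' : forall c c', c \in C' -> c' \in C' ->
    inner (cws_vec s' c') (cws_vec s' c) = (c == c')%:R%R.
  by move=> c c' _ _; exact: cws_orth gs'.
pose T := fun f : state n => local_op U (perm_op p f).
have uT : forall f g, inner (T f) (T g) = inner f g.
  move=> f g; rewrite /T local_unitary ?perm_unitary // => k.
  by case: (hU k) => h _; apply: mulmx1C.
have det' : forall v' u', (pweight v' u' < d)%N ->
    detectable C' (cws_vec s') (pauli_app v' u').
  move=> v' u' hw.
  have [v [u [lam [we hE]]]] := T_conj p hU v' u'.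
  apply: (transfer (T := T) (E := pauli_app v u) (lam := lam) oC oC' uT) => //.
    move=> f a Ha y; rewrite /pauli_app Ha GRing.mulr_sumr.
    by apply: eq_bigr => c _; rewrite GRing.mulrCA.
  by apply: hdet; rewrite we.
have [c1 [c2 [hc1 hc2 ne]]] := card_gt1P hC.
have [x1 [x2 [hx1 hx2 nx]]] := two_elems oC oC' uT h2 hc1 hc2 ne.
have diag : forall i (c : bvec n), c \in C' ->
    inner (cws_vec s' c) (pauli_app (unitv i) (adjrow R' i) (cws_vec s' c)) = ((-1) ^+ (c i))%R.
  move=> i c hc.
  rewrite (inner_ext _ (fun y => pauli_cws _ _ _ _ y)).
  have -> : pauli_app (unitv i) (adjrow R' i) s' = s' by exact: gs'.1 i.
  by rewrite innerZr oC' // eqxx GRing.mulr1 dotb_unit.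
have const : forall i, (gen_weight R' i < d)%N -> x1 i = x2 i.
  move=> i hi; have [cE HcE] := det' _ _ hi.
  have e1 := HcE _ _ hx1 hx1; have e2 := HcE _ _ hx2 hx2.
  rewrite diag // eqxx in e1; rewrite diag // eqxx in e2.
  by apply: (@signr_inj algC); rewrite e1 e2.
set w := bxor x1 x2.
have hw : (pweight (bzero n) w < d)%N.
  apply: (@leq_ltn_trans (#|[pred i | d <= gen_weight R' i]|)); last first.
    rewrite -count_card -(count_map (gen_weight R') (fun x => d <= x)).
    have -> : count (fun x => d <= x) [seq gen_weight R' i | i <- enum 'I_n] =
       count (fun x => d <= x) (sort geq [seq gen_weight R' i | i <- enum 'I_n]).
      by apply/esym; have := perm_sort geq [seq gen_weight R' i | i <- enum 'I_n]; move=> /(_ [seq gen_weight R' i | i <- enum 'I_n]); rewrite perm_refl => /seq.permP ->.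
    apply: leq_ltn_trans (count_bound _ hlt) _.
      by apply: sort_sorted => a b; apply: leq_total.
    by rewrite prednK.
  apply: subset_leq_card; apply/subsetP => i; rewrite !inE /= !ffunE => hwi.
  rewrite leqNgt; apply/negP => /const e.
  by move: hwi; rewrite e addbb.
have [cE HcE] := det' _ _ hw.
have := HcE _ _ hx1 hx2.
rewrite (negbTE nx) (inner_ext _ (fun y => Z_cws _ _ _ y)).
have -> : bxor w x1 = x2.
  by apply/ffunP => i; rewrite !ffunE addbC addbA addbb.
rewrite oC' // eqxx => /eqP; by rewrite oner_eq0.
Qed.
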